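(* Let $G$ be a connected graph with diameter $d\in\{3,4\}$. If $\dim(G)=n(G)-d$, then $D(G)=n(G)-2$ if and only if $G$ is isomorphic to $P_4$.
   Context: All graphs are finite and simple; $n(G)=|V(G)|$; $P_4$ is the path on four vertices; the diameter is the largest distance between two vertices. For a connected graph $G$ with shortest-path distance $d_G$, a set $S\subseteq V(G)$ is resolving if for any two distinct vertices $x,y$ there is $s\in S$ with $d_G(x,s)\neq d_G(y,s)$; the metric dimension $\dim(G)$ is the minimum size of a resolving set. A distinguishing coloring of a graph $G$ is a (not necessarily proper) vertex coloring such that the only automorphism of $G$ mapping every vertex to a vertex of the same color is the identity; the distinguishing number $D(G)$ is the minimum number of colors in a distinguishing coloring of $G$. *)

(* Defs.v *)
(* A simple graph is a symmetric irreflexive relation e on a finType T. *)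
From mathcomp Require Import all_boot all_fingroup.
Set Implicit Arguments. Unset Strict Implicit. Unset Printing Implicit Defensive.

Section Graph.
Variables (T : finType) (e : rel T).

Fixpoint within (k : nat) (x y : T) : bool :=
  if k is k'.+1 then within k' x y || [exists z, within k' x z && e z y]
  else x == y.

Definition connected_graph : Prop := forall x y : T, exists k, within k x y.

(* shortest-path distance: least k <= #|T| with a walk of length <= k
   (correct for connected graphs, where distances are < #|T|) *)
Definition gdist (x y : T) : nat := find (fun k => within k x y) (iota 0 #|T|.+1).

Definition diameter : nat := \max_(x : T) \max_(y : T) gdist x y.

Definition resolving (S : {set T}) : bool :=
  [forall x : T, forall y : T, (x != y) ==> [exists s in S, gdist x s != gdist y s]].

Definition metric_dim : nat := \big[minn/#|T|]_(S : {set T} | resolving S) #|S|.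

Definition graph_aut (f : {perm T}) : bool := [forall x, forall y, e (f x) (f y) == e x y].

Definition distinguishing (k : nat) (c : {ffun T -> 'I_k}) : bool :=
  [forall f : {perm T}, (graph_aut f && [forall x, c (f x) == c x]) ==> (f == 1%g)].

Definition distinguishing_number : nat :=
  \big[minn/#|T|]_(k < #|T|.+1 | [exists c : {ffun T -> 'I_k}, distinguishing c]) (k : nat).

End Graph.

Definition P4rel : rel 'I_4 := fun i j => (i.+1 == j :> nat) || (j.+1 == i :> nat).

Definition isomorphic_to_P4 (T : finType) (e : rel T) : Prop :=
  exists f : T -> 'I_4, bijective f /\ forall x y, e x y = P4rel (f x) (f y).

(* Main.v *)
Require Import Defs.
From mathcomp Require Import all_boot all_fingroup.
From mathcomp Require Import zify.
Set Implicit Arguments. Unset Strict Implicit. Unset Printing Implicit Defensive.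

Lemma bigmin_le (I : eqType) (r : seq I) (P : pred I) (F : I -> nat) x0 i0 :
  i0 \in r -> P i0 -> \big[minn/x0]_(i <- r | P i) F i <= F i0.
Proof.
elim: r => [|j r IH] //; rewrite in_cons big_cons => /orP [/eqP <- Pi|ir Pi].
  by rewrite Pi geq_minl.
case: (P j); last exact: IH.
by rewrite (leq_trans (geq_minr _ _)) // IH.
Qed.

Lemma P4_rev (i j : 'I_4) : P4rel (rev_ord i) (rev_ord j) = P4rel i j.
Proof. by case: i => [[|[|[|[|?]]]] ?]; case: j => [[|[|[|[|?]]]] ?]. Qed.

Lemma P4_rigid (h : 'I_4 -> 'I_4) : injective h ->
  (forall i j, P4rel (h i) (h j) = P4rel i j) -> h ord0 = ord0 -> forall i, h i = i.
Proof.
move=> hinj hP h0.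
pose o1 := @Ordinal 4 1 isT; pose o2 := @Ordinal 4 2 isT; pose o3 := @Ordinal 4 3 isT.
have : (h o1 == o1) && (h o2 == o2) && (h o3 == o3).
  have i01 : h ord0 != h o1 by rewrite (inj_eq hinj).
  have i02 : h ord0 != h o2 by rewrite (inj_eq hinj).
  have i12 : h o1 != h o2 by rewrite (inj_eq hinj).
  have i13 : h o1 != h o3 by rewrite (inj_eq hinj).
  have i23 : h o2 != h o3 by rewrite (inj_eq hinj).
  move: (hP ord0 o1) (hP o1 o2) (hP o2 o3) i01 i02 i12 i13 i23.
  rewrite h0.
  case: (h o1) => [[|[|[|[|?]]]] ?] //; case: (h o2) => [[|[|[|[|?]]]] ?] //;
  case: (h o3) => [[|[|[|[|?]]]] ?] //.
move=> /andP [/andP [/eqP h1 /eqP h2] /eqP h3].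
case=> [[|[|[|[|k]]]] p] //.
- by rewrite (_ : Ordinal p = ord0) ?h0 //; apply: val_inj.
- by rewrite (_ : Ordinal p = o1) ?h1 //; apply: val_inj.
- by rewrite (_ : Ordinal p = o2) ?h2 //; apply: val_inj.
- by rewrite (_ : Ordinal p = o3) ?h3 //; apply: val_inj.
Qed.

Section G.
Variables (T : finType) (e : rel T).
Hypothesis e_sym : symmetric e.
Hypothesis e_irr : irreflexive e.

Lemma within_mono k u v : within e k u v -> within e k.+1 u v.
Proof. by move=> h /=; rewrite h. Qed.

Lemma within_le m n u v : m <= n -> within e m u v -> within e n u v.
Proof.
elim: n => [|n IH]; first by rewrite leqn0 => /eqP ->.
rewrite leq_eqVlt => /orP [/eqP -> //|]; rewrite ltnS => hm h.
exact/within_mono/IH.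
Qed.

Lemma within_trans m n u v w : within e m u v -> within e n v w -> within e (m + n) u w.
Proof.
move=> h1; elim: n w => [|n IH] w /=; first by move=> /eqP <-; rewrite addn0.
rewrite addnS /= => /orP [h|/existsP [z /andP [hz ez]]].
  by rewrite IH.
apply/orP; right; apply/existsP; exists z; by rewrite IH.
Qed.

Lemma within_edge u v : e u v -> within e 1 u v.
Proof. by move=> h /=; apply/orP; right; apply/existsP; exists u; rewrite eqxx h. Qed.

Lemma within_sym k u v : within e k u v = within e k v u.
Proof.
suff H : forall k u v, within e k u v -> within e k v u.
  by apply/idP/idP; apply: H.
elim=> [|n IH] {}u {}v /=; first by rewrite eq_sym.
move=> /orP [h|/existsP [z /andP [hz ez]]]; first by rewrite IH.
have := within_trans (within_edge (_ : e v z)) (IH _ _ hz).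
by rewrite add1n; apply; rewrite e_sym.
Qed.

Lemma gdist_sym u v : gdist e u v = gdist e v u.
Proof. by rewrite /gdist; apply: eq_find => k; rewrite within_sym. Qed.

Lemma gdist_eqk k u v : k <= #|T| -> within e k u v ->
  (forall j, j < k -> ~~ within e j u v) -> gdist e u v = k.
Proof.
move=> hk hw hj; rewrite /gdist.
have -> : #|T|.+1 = k + (#|T|.+1 - k) by rewrite subnKC // ltnW.
rewrite iotaD find_cat.
have -> : has (fun k0 => within e k0 u v) (iota 0 k) = false.
  apply/negbTE/hasPn => j; rewrite mem_iota add0n => /andP [_ ]; exact: hj.
rewrite size_iota add0n.
have -> : #|T|.+1 - k = (#|T| - k).+1 by rewrite subSn.
by rewrite /= hw addn0.
Qed.

Lemma gdist_eqS k u v : k.+1 <= #|T| -> within e k.+1 u v -> ~~ within e k u v ->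
  gdist e u v = k.+1.
Proof.
move=> hk hw hn; apply: gdist_eqk => // j; rewrite ltnS => hj.
by apply: contra hn; apply: within_le.
Qed.

Lemma gdist_refl u : gdist e u u = 0.
Proof. by apply: gdist_eqk => //; rewrite /= eqxx. Qed.

Lemma gdist_ge3 u v : 2 < gdist e u v -> ~~ within e 2 u v.
Proof.
move=> h; have hs := find_size (fun k => within e k u v) (iota 0 #|T|.+1).
rewrite size_iota in hs.
have := before_find 0 h; rewrite nth_iota; first by move=> ->.
by rewrite (leq_trans h) // hs.
Qed.

Lemma within_aut (f : {perm T}) : graph_aut e f ->
  forall k u v, within e k (f u) (f v) = within e k u v.
Proof.
move=> /forallP ha.
have hf : forall x y, e (f x) (f y) = e x y by move=> x y; apply/eqP; move: (ha x) => /forallP.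
elim=> [|k IH] u v /=; first by rewrite (inj_eq perm_inj).
rewrite IH; congr orb.
apply/existsP/existsP => [[z hz]|[z hz]].
  by exists (f^-1 z)%g; rewrite -IH -[e (f^-1 z)%g v]hf permKV.
by exists (f z); rewrite IH hf.
Qed.

Lemma gdist_aut (f : {perm T}) u v : graph_aut e f -> gdist e (f u) (f v) = gdist e u v.
Proof. by move=> ha; rewrite /gdist; apply: eq_find => k; rewrite within_aut. Qed.


Definition rigid (a p q : T) := forall f : {perm T}, graph_aut e f ->
  f a \in [:: a; p; q] -> f p \in [:: a; p; q] -> f q \in [:: a; p; q] ->
  [/\ f a = a, f p = p & f q = q].

Lemma rigid_of a p q P Q R :
  gdist e a p = P -> gdist e p q = Q -> gdist e a q = R ->
  0 < P -> 0 < Q -> 0 < R -> P != Q -> Q != R -> P != R -> rigid a p q.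
Proof.
move=> hP hQ hR P0 Q0 R0 PQ QR PR f ha.
have hP' : gdist e p a = P by rewrite gdist_sym.
have hQ' : gdist e q p = Q by rewrite gdist_sym.
have hR' : gdist e q a = R by rewrite gdist_sym.
have H1 : gdist e (f a) (f p) = P by rewrite gdist_aut.
have H2 : gdist e (f p) (f q) = Q by rewrite gdist_aut.
have H3 : gdist e (f a) (f q) = R by rewrite gdist_aut.
rewrite !inE => /or3P [] /eqP ea /or3P [] /eqP ep /or3P [] /eqP eq;
  rewrite ?ea ?ep ?eq ?gdist_refl ?hP ?hQ ?hR ?hP' ?hQ' ?hR' in H1 H2 H3 => //;
  lia.
Qed.

Lemma walk3 K u v : ~~ within e 2 u v -> within e K u v ->
  exists b, within e 3 u b && ~~ within e 2 u b.
Proof.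
elim: K v => [|K IH] v hn.
  by move=> h; move: hn; rewrite (@within_le 0 2 u v _ h).
move=> /= /orP [h|/existsP [z /andP [hz ez]]]; first exact: (IH v hn h).
case hz2: (within e 2 u z).
  exists v; rewrite hn andbT; apply/orP; right; apply/existsP; exists z.
  by apply/andP; split.
by apply: (IH z) => //; rewrite hz2.
Qed.


Lemma color_ok a p q u w :
  a != p -> a != q -> a != u -> a != w -> p != q -> p != u -> p != w ->
  q != u -> q != w -> u != w ->
  rigid a p q -> gdist e u a != gdist e w a -> distinguishing_number e + 3 <= #|T|.
Proof.
move=> ap aq au aw pq pu pw qu qw uw hr hd.
pose L := [:: a; p; q].
pose g v := if v \in L then a else if v == w then u else v.
have gL v : v \in L -> g v = a by rewrite /g => ->.
have uL : u \notin L by rewrite !inE !negb_or eq_sym au eq_sym pu eq_sym qu.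
have wL : w \notin L by rewrite !inE !negb_or eq_sym aw eq_sym pw eq_sym qw.
have gw : g w = u by rewrite /g (negbTE wL) eqxx.
have gu : g u = u by rewrite /g (negbTE uL) (negbTE uw).
pose S := g @: [set: T].
have gS v : g v \in S by apply: imset_f; rewrite inE.
have aS : a \in S by rewrite -(gL a) ?inE ?eqxx.
pose c : {ffun T -> 'I_#|S|} := [ffun v => enum_rank_in aS (g v)].
have hc v1 v2 : c v1 = c v2 -> g v1 = g v2.
  rewrite !ffunE => h.
  by rewrite -(enum_rankK_in aS (gS v1)) h enum_rankK_in.
have dis : distinguishing e c.
  apply/forallP => f; apply/implyP => /andP [ha /forallP hcol].
  have hg v : g (f v) = g v by apply: hc; apply/eqP; exact: hcol v.
  have inL v : v \in L -> f v \in L.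
    move=> vL; have := hg v; rewrite (gL _ vL) /g.
    case: ifP => // fL; case: ifP => _; first by move=> ua; rewrite ua eqxx in au.
    by move=> fa; rewrite fa !inE eqxx in fL.
  have [fa fp fq] : [/\ f a = a, f p = p & f q = q].
    by apply: hr => //; apply: inL; rewrite !inE eqxx ?orbT.
  have fu : f u = u.
    have := hg u; rewrite gu /g; case: ifP => _; first by move=> ua; rewrite ua eqxx in au.
    case: ifP => // /eqP fw _.
    have := gdist_aut u a ha; rewrite fa fw => h; by rewrite h eqxx in hd.
  have fw : f w = w.
    have := hg w; rewrite gw /g; case: ifP => _; first by move=> ua; rewrite ua eqxx in au.
    case: ifP => [/eqP //|_ fwu].
    have : f u = f w by rewrite fu fwu.
    by move/perm_inj => /eqP; rewrite (negbTE uw).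
  apply/eqP/permP => v; rewrite perm1.
  case: (boolP (v \in L)) => vL.
    by move: vL; rewrite !inE => /or3P [] /eqP ->.
  case: (eqVneq v w) => [->//|vw]; case: (eqVneq v u) => [->//|vu].
  have := hg v; rewrite {2}/g (negbTE vL) (negbTE vw) /g.
  case: ifP => _; first by move=> av; rewrite -av !inE eqxx in vL.
  case: ifP => // _ uv; by rewrite uv eqxx in vu.
have card : #|S| + 3 <= #|T|.
  have sub : S \subset ~: (p |: (q |: [set w])).
    apply/subsetP => _ /imsetP [v _ ->]; rewrite !inE /g.
    case: ifP => [_|]; first by rewrite (negbTE ap) (negbTE aq) (negbTE aw).
    move/negbT; rewrite !inE !negb_or => /and3P [av pv qv].
    case: ifP => [_|/negbT vw].
      by rewrite [u == p]eq_sym [u == q]eq_sym (negbTE pu) (negbTE qu) (negbTE uw).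
    by rewrite (negbTE pv) (negbTE qv) (negbTE vw).
  have := subset_leq_card sub.
  have := cardsC (p |: (q |: [set w])).
  rewrite !cardsU1 cards1 !inE (negbTE pq) (negbTE pw) (negbTE qw) /=.
  by move=> <- h; rewrite addnC -[1 + (1 + 1)]/3 leq_add2l.
have hS : #|S| < #|T|.+1 by rewrite ltnS (leq_trans (leq_addr 3 _) card).
suff h : distinguishing_number e <= #|S|.
  exact: leq_trans (leq_add h (leqnn 3)) card.
rewrite /distinguishing_number.
apply: (@bigmin_le _ _ _ (fun k : 'I_#|T|.+1 => (k : nat)) _ (Ordinal hS)).
  exact: mem_index_enum.
by apply/existsP; exists c; exact: dis.
Qed.


Lemma within_refl k u : within e k u u.
Proof. exact: (@within_le 0 k u u (leq0n k) (eqxx u)). Qed.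

Lemma fwd : connected_graph e -> 3 <= diameter e ->
  distinguishing_number e = #|T| - 2 -> isomorphic_to_P4 e.
Proof.
move=> hc hd hD.
have [a [v hav]] : exists u v, 2 < gdist e u v.
  case: (boolP [exists u, exists v, 2 < gdist e u v]) => [/existsP [u /existsP [v h]]|/existsPn hn].
    by exists u, v.
  have : diameter e <= 2.
    apply/bigmax_leqP => u _; apply/bigmax_leqP => w _.
    by move: (hn u) => /existsPn /(_ w); rewrite -leqNgt.
  by move=> h; have := leq_trans hd h.
have [K hK] := hc a v.
have [b /andP [h3 h2]] := walk3 (gdist_ge3 hav) hK.
move: h3 => /orP [h|/existsP [y /andP [hy eyb]]]; first by move/negP: h2.
have nay : ~~ within e 1 a y.
  apply/negP => h; move/negP: h2; apply; exact: within_trans h (within_edge eyb).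
move: hy => /orP [h|/existsP [x /andP [hx exy]]]; first by move/negP: nay.
have eax : e a x.
  move: hx => /orP [/eqP ax|/existsP [z /andP [/eqP <- //]]].
  by move: nay; rewrite ax (within_edge exy).
have nxb : ~~ within e 1 x b.
  apply/negP => h; move/negP: h2; apply; exact: within_trans (within_edge eax) h.
have ax : a != x by apply/eqP => ax; rewrite ax e_irr in eax.
have xy : x != y by apply/eqP => xy; rewrite xy e_irr in exy.
have yb : y != b by apply/eqP => yb; rewrite yb e_irr in eyb.
have ay : a != y by apply: contra nay => /eqP ->; exact: within_refl.
have xb : x != b by apply: contra nxb => /eqP ->; exact: within_refl.
have ab : a != b by apply: contra h2 => /eqP ->; exact: within_refl.
have c4 : 4 <= #|T|.
  have : #|[:: a; x; y; b]| = 4.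
    apply/card_uniqP; rewrite /= !inE !negb_or ax ay ab xy xb yb. done.
  by move=> <-; apply: max_card.
have dax : gdist e a x = 1.
  by apply: gdist_eqS => //; try exact: (leq_trans _ c4); exact: within_edge.
have dxb : gdist e x b = 2.
  apply: gdist_eqS => //; try exact: (leq_trans _ c4).
  exact: within_trans (within_edge exy) (within_edge eyb).
have day : gdist e a y = 2.
  apply: gdist_eqS => //; try exact: (leq_trans _ c4).
  exact: within_trans (within_edge eax) (within_edge exy).
have dyb : gdist e y b = 1.
  by apply: gdist_eqS => //; try exact: (leq_trans _ c4); exact: within_edge.
have dab : gdist e a b = 3.
  apply: gdist_eqS => //; try exact: (leq_trans _ c4).
  exact: within_trans (within_trans (within_edge eax) (within_edge exy)) (within_edge eyb).
have r1 : rigid a x b by apply: (rigid_of dax dxb dab).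
have r2 : rigid a y b by apply: (rigid_of day dyb dab).
case: (boolP [exists w, w \notin [:: a; x; y; b]]) => [/existsP [w]|/existsPn hall].
  rewrite !inE !negb_or => /and4P [wa wx wy wb].
  suff H : distinguishing_number e + 3 <= #|T|.
    by move: H; rewrite hD -[3]/(2+1) addnA subnK ?addn1 ?ltnn //; apply: leq_trans c4.
  case: (eqVneq (gdist e w a) 2) => hw.
    apply: (@color_ok a y b x w) => //; try by rewrite eq_sym.
    by rewrite hw gdist_sym dax.
  apply: (@color_ok a x b y w) => //; try by rewrite eq_sym.
  by rewrite gdist_sym day eq_sym.
have inl t : t \in [:: a; x; y; b] by have := hall t; rewrite negbK.
have E1 : (x == a) = false by rewrite eq_sym (negbTE ax).
have E2 : (y == a) = false by rewrite eq_sym (negbTE ay).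
have E3 : (b == a) = false by rewrite eq_sym (negbTE ab).
have E4 : (y == x) = false by rewrite eq_sym (negbTE xy).
have E5 : (b == x) = false by rewrite eq_sym (negbTE xb).
have E6 : (b == y) = false by rewrite eq_sym (negbTE yb).
have F1 : e x a by rewrite e_sym.
have F2 : e y x by rewrite e_sym.
have F3 : e b y by rewrite e_sym.
have F4 : e a y = false.
  by apply/negP => h; move/negP: nay; apply; exact: within_edge h.
have F5 : e y a = false by rewrite e_sym.
have F6 : e x b = false.
  by apply/negP => h; move/negP: nxb; apply; exact: within_edge h.
have F7 : e b x = false by rewrite e_sym.
have F8 : e a b = false.
  by apply/negP => h; move/negP: h2; apply; exact: within_mono (within_edge h).
have F9 : e b a = false by rewrite e_sym.
pose o0 := @Ordinal 4 0 isT; pose o1 := @Ordinal 4 1 isT.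
pose o2 := @Ordinal 4 2 isT; pose o3 := @Ordinal 4 3 isT.
pose f v := if v == a then o0 else if v == x then o1 else if v == y then o2 else o3.
pose g (i : 'I_4) := nth a [:: a; x; y; b] i.
clear v hav hK.
exists f; split.
  exists g.
    move=> v; have := inl v; rewrite !inE => /or4P [] /eqP ->;
    by rewrite /f ?eqxx ?E1 ?E2 ?E3 ?E4 ?E5 ?E6.
  move=> [[|[|[|[|i]]]] hi] //; apply: val_inj;
  by rewrite /g /f /= ?eqxx ?E1 ?E2 ?E3 ?E4 ?E5 ?E6.
move=> u v; have := inl u; have := inl v;
rewrite !inE => /or4P [] /eqP -> /or4P [] /eqP ->;
by rewrite /f ?eqxx ?E1 ?E2 ?E3 ?E4 ?E5 ?E6 ?e_irr ?eax ?exy ?eyb ?F1 ?F2 ?F3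
  ?F4 ?F5 ?F6 ?F7 ?F8 ?F9.
Qed.

Lemma bwd : isomorphic_to_P4 e -> distinguishing_number e = #|T| - 2.
Proof.
case=> phi [[psi hK1 hK2] hE].
have cT : #|T| = 4 by rewrite (bij_eq_card (Bijective hK1 hK2)) card_ord.
have inj_phi : injective phi := can_inj hK1.
have hf (f : {perm T}) : graph_aut e f -> forall x y, e (f x) (f y) = e x y.
  by move=> /forallP ha x y; apply/eqP; move: (ha x) => /forallP.
rewrite cT (_ : 4 - 2 = 2) //.
apply/eqP; rewrite eqn_leq; apply/andP; split.
  pose c : {ffun T -> 'I_2} := [ffun v => if phi v == ord0 then ord_max else ord0].
  have dis : distinguishing e c.
    apply/forallP => f; apply/implyP => /andP [ha /forallP hcol].
    pose h i := phi (f (psi i)).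
    have hinj : injective h by move=> i j /inj_phi /perm_inj /(can_inj hK2).
    have hP i j : P4rel (h i) (h j) = P4rel i j by rewrite /h -hE hf // hE !hK2.
    have h0 : h ord0 = ord0.
      have := hcol (psi ord0); rewrite !ffunE hK2 eqxx /h.
      by case: ifP => // /eqP.
    have hid := P4_rigid hinj hP h0.
    apply/eqP/permP => v; rewrite perm1; apply: inj_phi.
    by have := hid (phi v); rewrite /h hK1.
  have hS : 2 < #|T|.+1 by rewrite cT.
  rewrite /distinguishing_number.
  apply: (@bigmin_le _ _ _ (fun k : 'I_#|T|.+1 => (k : nat)) _ (Ordinal hS)).
    exact: mem_index_enum.
  by apply/existsP; exists c; exact: dis.
rewrite /distinguishing_number.
apply: (big_ind (fun m => 2 <= m)); first by rewrite cT.
  by move=> m1 m2 h1 h2; rewrite leq_min h1 h2.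
move=> k /existsP [c' dis']; rewrite leqNgt; apply/negP => hk.
have rinj : injective (fun v => psi (rev_ord (phi v))).
  by move=> u v /(can_inj hK2) /rev_ord_inj /inj_phi.
pose r := perm rinj.
have raut : graph_aut e r.
  apply/forallP => x; apply/forallP => y.
  by rewrite !permE hE !hK2 P4_rev -hE.
have rc : [forall x, c' (r x) == c' x].
  apply/forallP => x; apply/eqP; apply: val_inj.
  have l1 := ltn_ord (c' (r x)); have l2 := ltn_ord (c' x).
  move: l1 l2; case: (c' (r x)) => [[|?] ?] //=; case: (c' x) => [[|?] ?] //=.
  - by move=> _ H; move: (leq_trans H hk).
  - by move=> H; move: (leq_trans H hk).
  - by move=> H; move: (leq_trans H hk).
move/forallP: dis' => /(_ r); rewrite raut rc /= => /eqP r1.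
have := congr1 (fun g : {perm T} => g (psi ord0)) r1; rewrite /= permE perm1.
by move/(congr1 phi); rewrite !hK2 => /(congr1 val).
Qed.

End G.

Theorem lemma4p12 (T : finType) (e : rel T)
  (e_sym : symmetric e) (e_irr : irreflexive e)
  (e_conn : connected_graph e)
  (hd : diameter e = 3 \/ diameter e = 4)
  (hdim : metric_dim e = #|T| - diameter e) :
  distinguishing_number e = #|T| - 2 <-> isomorphic_to_P4 e.
Proof.
split; last exact: bwd.
apply: fwd => //; by case: hd => ->.
Qed.
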